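(* Let $S$ be a finite $p$-group for an odd prime $p$. If every subgroup $L$ of $S$ with $\mathfrak{X}(S)\leq L\leq J(S)\mathfrak{X}(S)$ is normal in $S$, then $J(S)\leq \mathfrak{X}(S)$.
   Context: For a finite $p$-group $G$ and subgroups $A,B$, write $[A,B;1]=[A,B]$ and $[A,B;k]=[[A,B;k-1],B]$. $\Omega_1(G)$ denotes the subgroup generated by the elements of order $p$ in $G$. The Oliver subgroup $\mathfrak{X}(G)$ of a finite $p$-group $G$ is the unique largest normal subgroup $K$ of $G$ admitting a chain $1=Q_0\leq Q_1\leq\cdots\leq Q_n=K$ of normal subgroups $Q_i\unlhd G$ such that $[\Omega_1(C_G(Q_{i-1})),Q_i;p-1]=1$ for each $1\leq i\leq n$. $J(S)$ is the Thompson subgroup of $S$: the subgroup generated by all elementary abelian $p$-subgroups of $S$ whose rank equals the $p$-rank of $S$ (the largest rank of an elementary abelian $p$-subgroup of $S$). *)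

(* Defs.v *)
From mathcomp Require Import all_boot all_fingroup all_solvable.
Set Implicit Arguments. Unset Strict Implicit. Unset Printing Implicit Defensive.
Local Open Scope group_scope.

Section Defs.
Variable gT : finGroupType.

Definition omega1 (p : nat) (A : {set gT}) : {set gT} :=
  <<[set x in A | #[x] == p]>>.

Fixpoint itcomm (A B : {set gT}) (k : nat) : {set gT} :=
  match k with
  | 0 => A
  | k'.+1 => [~: itcomm A B k', B]
  end.

Definition thompson (p : nat) (S : {set gT}) : {set gT} :=
  <<\bigcup_(E in 'E_p^('r_p(S))(S)) E>>.

Definition oliver_chain (p : nat) (S K : {group gT}) : Prop :=
  exists (n : nat) (Q : nat -> {group gT}),
    [/\ Q 0 = 1 :> {set gT}, Q n = K :> {set gT},
        (forall i, i <= n -> Q i <| S),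
        (forall i, 0 < i <= n -> Q i.-1 \subset Q i) &
        (forall i, 0 < i <= n ->
           itcomm (omega1 p 'C_S(Q i.-1)) (Q i) p.-1 = 1)].

Definition is_oliver (p : nat) (S X : {group gT}) : Prop :=
  [/\ X <| S, oliver_chain p S X &
      forall K : {group gT}, K <| S -> oliver_chain p S K -> K \subset X].

End Defs.

(* Main.v *)
Require Import Defs.
From mathcomp Require Import all_boot all_fingroup all_solvable.
Local Open Scope group_scope.

Module Aux.
Set Implicit Arguments. Unset Strict Implicit. Unset Printing Implicit Defensive.
Section S.
Variable gT : finGroupType.
Implicit Types (S X Q W A B : {group gT}).

Lemma itcomm_quad (W Q : {set gT}) k :
  [~: [~: W, Q], Q] = 1 -> 2 <= k -> itcomm W Q k = 1.
Proof.
move=> H2 Hk; have [m ->] : exists m, k = m.+2.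
  by exists k.-2; case: k Hk => [|[|k]].
elim: m => [|m IH] //.
by rewrite (_ : itcomm W Q m.+3 = [~: itcomm W Q m.+2, Q]) // IH comm1G.
Qed.

Lemma ext_chain p S X Q :
  is_oliver p S X -> Q <| S -> X \subset Q ->
  itcomm (omega1 p 'C_S(X)) Q p.-1 = 1 -> Q \subset X.
Proof.
case=> nXS [n [Qs [Q0 Qn Qnorm Qsub Qcomm]]] Hmax nQS sXQ HQ.
apply: Hmax => //.
exists n.+1, (fun i => if i <= n then Qs i else Q); split.
- by rewrite leq0n.
- by rewrite ltnn.
- move=> i Hi; case: (leqP i n) => Hin; first exact: Qnorm.
  done.
- move=> i /andP[i0 Hi]; case: (leqP i n) => Hin.
  + have -> : i.-1 <= n by rewrite (leq_trans (leq_pred i)).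
    by apply: Qsub; rewrite i0.
  + have Ei : i = n.+1 by apply/eqP; rewrite eqn_leq Hi.
    by rewrite Ei /= leqnn Qn.
- move=> i /andP[i0 Hi]; case: (leqP i n) => Hin.
  + have -> : i.-1 <= n by rewrite (leq_trans (leq_pred i)).
    by apply: Qcomm; rewrite i0.
  + have Ei : i = n.+1 by apply/eqP; rewrite eqn_leq Hi.
    by rewrite Ei /= leqnn Qn.
Qed.


Lemma subW_C p (C : {group gT}) : omega1 p C \subset C.
Proof. by rewrite /omega1 gen_subG; apply/subsetP => x; rewrite inE => /andP[]. Qed.

Lemma oliver_cent p S X :
  2 < p -> p.-group S -> is_oliver p S X -> 'C_S(X) \subset X.
Proof.
move=> p2 pS HX; have [nXS _ _] := HX.
have sXS := normal_sub nXS; have nXS' := normal_norm nXS.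
apply/negPn/negP => nCX.
set C := 'C_S(X).
have nCS : C <| S.
  by have := subcent_normal S X; rewrite (setIidPl nXS').
have sCS : C \subset S := subsetIl _ _.
have sCN : C \subset 'N(X) := subset_trans sCS nXS'.
have nilG : nilpotent (S / X) by apply: pgroup_nil (quotient_pgroup _ pS).
have nHG : C / X <| S / X by apply: quotient_normal.
have ntH : C / X != 1.
  by apply: contra nCX => /eqP H1; rewrite -quotient_sub1 // H1 sub1G.
have := meet_center_nil nilG nHG ntH.
case/trivgPn => y /setIP[Hy Zy] nty.
case/morphimP: Hy => c Nc Cc Ey.
set Q := coset X @*^-1 <[y]>.
have sYZ : <[y]> \subset 'Z(S / X) by rewrite cycle_subG.
have sYG : <[y]> \subset S / X := subset_trans sYZ (subsetIl _ _).
have nQS : Q <| S.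
  rewrite -(quotientGK nXS) cosetpre_normal.
  exact: sub_center_normal.
have sXQ : X \subset Q by rewrite -{1}(ker_coset X); apply: morphpreS; exact: sub1G.
have cQ : c \in Q by rewrite /Q mem_morphpre // -Ey cycle_id.
have ncX : c \notin X.
  by apply/negP => cX; move: nty; rewrite Ey /= (coset_id cX) eqxx.
have sQS : Q \subset S := normal_sub nQS.
have sQN : Q \subset 'N(X) := subset_trans sQS nXS'.
have sWC : omega1 p C \subset C := subW_C p C.
have c1 : [~: omega1 p C, Q] \subset X.
  rewrite commGC; apply: subset_trans (commgS _ sWC) _.
  apply: subset_trans (commgS _ sCS) _.
  rewrite -quotient_cents2 // /Q cosetpreK.
  exact: subset_trans sYZ (subsetIr _ _).
have c2 : [~: omega1 p C, Q] \subset C.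
  apply: subset_trans (commSg _ sWC) _.
  rewrite commg_subl; exact: subset_trans sQS (normal_norm nCS).
have c3 : Q \subset 'C(X :&: C).
  have -> : Q = coset X @*^-1 <[y]> by [].
  apply: (subset_trans (morphpreS _ (_ : <[y]> \subset C / X))).
    by rewrite cycle_subG Ey mem_quotient.
  rewrite quotientK // mul_subG //.
    rewrite centsC; apply: subset_trans (subsetIr _ _) _.
    exact: subsetIr.
  apply: subset_trans (_ : C \subset 'C(X)) _; first exact: subsetIr.
  by apply: centS; exact: subsetIl.
have H2 : [~: [~: omega1 p C, Q], Q] = 1.
  apply/commG1P; rewrite centsC.
  apply: subset_trans c3 _; apply: centS.
  by rewrite subsetI c1 c2.
have := ext_chain HX nQS sXQ (itcomm_quad H2 _).
have -> : 2 <= p.-1 by move: p2; case: (p) => [|[|[|]]].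
move=> /(_ isT) /subsetP /(_ c cQ); exact/negP.
Qed.

Lemma W_props p S X :
  prime p -> 2 < p -> p.-group S -> is_oliver p S X ->
  let Om := omega1 p 'C_S(X) in
  [/\ p.-abelem Om, Om \subset S, S \subset 'N(Om) & X \subset 'C(Om)].
Proof.
move=> pr p2 pS HX Om; have [nXS _ _] := HX.
have sCX := oliver_cent p2 pS HX.
set C := 'C_S(X)%G.
have sWC : Om \subset C := subW_C p C.
have sCS : C \subset S := subsetIl _ _.
have cCC : abelian C.
  by apply: subset_trans (subsetIr S 'C(X)) (centS sCX).
have pC : p.-group C := pgroupS sCS pS.
have aW : p.-abelem Om.
  apply: (@abelemS _ p (<<[set x in C | #[x] == p]>>)%G _ _ (Ohm1_abelem pC cCC)).
  apply: subset_trans (_ : Om \subset <<[set x in C | prime #[x]]>>) _.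
    rewrite /Om /omega1; apply: genS; apply/subsetP => x.
    by rewrite !inE => /andP[-> /eqP ->].
  by rewrite -Ohm1Eprime; apply: subxx.
split=> //.
- exact: subset_trans sWC sCS.
- rewrite /Om /omega1; apply: norms_gen.
  have -> : [set x in C | #[x] == p] = C :&: [set x | #[x] == p].
    by apply/setP => x; rewrite !inE.
  apply: normsI; last first.
    by apply/normsP => g _; apply/setP => x; rewrite mem_conjg !inE orderJ.
  by have := subcent_normal S X; rewrite (setIidPl (normal_norm nXS)) => /normal_norm.
- rewrite centsC; apply: subset_trans sWC _; exact: subsetIr.
Qed.

End S.

Section Q.
Variable gT : finGroupType.

Lemma abelem_join p (G H : {group gT}) :
  prime p -> p.-abelem G -> p.-abelem H -> H \subset 'C(G) -> p.-abelem (G <*> H).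
Proof.
move=> pr aG aH cGH; apply/abelemP => //; split.
  by rewrite /= (cent_joinEr cGH) abelianM (abelem_abelian aG) (abelem_abelian aH) cGH.
move=> y; rewrite /= (cent_joinEr cGH) => /mulsgP[g h Gg Hh ->].
rewrite expgMn; last exact/esym/(centP (subsetP cGH h Hh)).
by case/(abelemP pr): aG => _ -> //; case/(abelemP pr): aH => _ -> //; rewrite mulg1.
Qed.

Lemma rank_bound p (S E B : {group gT}) :
  prime p -> E \subset S -> p.-abelem E -> B \in 'E_p^('r_p(S))(S) -> #|E| <= #|B|.
Proof.
move=> pr sES aE /pnElemP[_ aB lB].
have le : logn p #|E| <= 'r_p(S) by apply: logn_le_p_rank; apply/pElemP.
rewrite (card_pgroup (abelem_pgroup aE)) (card_pgroup (abelem_pgroup aB)) lB.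
by rewrite leq_exp2l // prime_gt1.
Qed.

Lemma commW (W : {group gT}) w g : w \in W -> g \in 'N(W) -> [~ w, g] \in W.
Proof. by move=> Ww Ng; rewrite /commg groupM ?groupV // memJ_norm. Qed.

Lemma itcomm_sub (S W B : {group gT}) k :
  W \subset S -> B \subset S -> itcomm W B k \subset 'L_k.+1(S).
Proof.
move=> sWS sBS; elim: k => [|k IH] /=; first by rewrite lcn1.
by rewrite lcnSn commgSS.
Qed.

Lemma itcomm_subW (W B : {group gT}) k :
  B \subset 'N(W) -> itcomm W B k \subset W.
Proof.
move=> nWB; elim: k => [|k IH] //=.
by apply: subset_trans (commSg _ IH) _; rewrite commg_subl.
Qed.

Lemma find_x (p : nat) (S W B : {group gT}) :
  p.-group S -> W \subset S -> B \subset S -> B \subset 'N(W) ->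
  (exists w a b, [/\ w \in W, a \in B, b \in B & [~ w, a, b] != 1]) ->
  exists x, [/\ x \in W,
     (exists a b, [/\ a \in B, b \in B & [~ x, a, b] != 1]) &
     forall a b c, a \in B -> b \in B -> c \in B -> [~ x, a, b, c] = 1].
Proof.
move=> pS sWS sBS nWB [w0 [a0 [b0 [Ww0 Ba0 Bb0 nt0]]]].
have [n Ln] := lcnP S (pgroup_nil pS).
pose P k := [exists w, [exists a, [exists b,
   [&& w \in itcomm W B k, a \in B, b \in B & [~ w, a, b] != 1]]]].
have P0 : P 0.
  by apply/existsP; exists w0; apply/existsP; exists a0; apply/existsP; exists b0;
     rewrite /= Ww0 Ba0 Bb0 nt0.
have trivk : forall m, itcomm W B (n + m) \subset [1].
  elim=> [|m IH].
    by rewrite addn0 -Ln itcomm_sub.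
  rewrite addnS (_ : itcomm W B (n + m).+1 = [~: itcomm W B (n + m), B]) //.
  by apply: subset_trans (commSg _ IH) _; rewrite comm1G.
have ub : forall k, P k -> k <= n.
  move=> k /existsP[w /existsP[a /existsP[b /and4P[Ww _ _ nt]]]].
  rewrite leqNgt; apply/negP => ltnk.
  move: Ww; rewrite -(subnKC (ltnW ltnk)) => /(subsetP (trivk _)) /set1P Ew.
  by move: nt; rewrite Ew !comm1g eqxx.
case: (ex_maxnP (ex_intro P 0 P0) ub) => k Pk maxk.
case/existsP: Pk => x /existsP[a /existsP[b /and4P[Wx Ba Bb nt]]].
exists x; split.
- exact: (subsetP (itcomm_subW k nWB)).
- by exists a, b.
- move=> a1 b1 c1 Ba1 Bb1 Bc1; apply/eqP; apply/negPn/negP => nt1.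
  have : P k.+1.
    apply/existsP; exists [~ x, a1]; apply/existsP; exists b1; apply/existsP; exists c1.
    by rewrite Bb1 Bc1 nt1 /= mem_commg.
  by move/maxk; rewrite ltnn.
Qed.

Lemma replace (p : nat) (S W B : {group gT}) :
  prime p -> p.-group S -> p.-abelem W -> W \subset S -> S \subset 'N(W) ->
  B \in 'E_p^('r_p(S))(S) ->
  (exists w a b, [/\ w \in W, a \in B, b \in B & [~ w, a, b] != 1]) ->
  exists2 T : {group gT}, T \in 'E_p^('r_p(S))(S) &
     ~~ (T \subset 'C(W)) && (#|B :&: W| < #|T :&: W|).
Proof.
move=> pr pS aW sWS nWS EB nq.
case/pnElemP: (EB) => sBS aB lB.
have nWB : B \subset 'N(W) := subset_trans sBS nWS.
have cWW : abelian W := abelem_abelian aW.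
have cBB : abelian B := abelem_abelian aB.
have cW : forall u v, u \in W -> v \in W -> commute u v.
  by move=> u v Wu Wv; apply: (centsP cWW).
have cB : forall u v, u \in B -> v \in B -> commute u v.
  by move=> u v Bu Bv; apply: (centsP cBB).
have [x [Wx [a0 [b0 [Ba0 Bb0 nt0]]] x3]] := find_x pS sWS sBS nWB nq.
set Z := (W :&: B)%G.
have sZW : Z \subset W := subsetIl _ _.
have sZB : Z \subset B := subsetIr _ _.
have sCZ : 'C_W(B) \subset Z.
  set C := 'C_W(B)%G.
  have cCB : B \subset 'C(C) by rewrite centsC subsetIr.
  have aC : p.-abelem C := abelemS (subsetIl _ _) aW.
  have aCB := abelem_join pr aC aB cCB.
  have sCBS : C <*> B \subset S.
    by rewrite join_subG (subset_trans (subsetIl _ _) sWS) sBS.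
  have le := rank_bound pr sCBS aCB EB.
  have E := mul_cardG C B; rewrite -(cent_joinEr cCB) in E.
  have le2 : #|C| <= #|C :&: B|.
    by rewrite -(leq_pmul2r (cardG_gt0 B)) E [X in _ <= X]mulnC leq_mul2r le orbT.
  have eC : C :&: B = C.
    by apply/eqP; rewrite eqEcard subsetIl le2.
  by rewrite subsetI subsetIl -eC subsetIr.
have xaW : forall a, a \in B -> [~ x, a] \in W.
  by move=> a Ba; rewrite commW // (subsetP nWB).
have x2Z : forall a b, a \in B -> b \in B -> [~ x, a, b] \in Z.
  move=> a b Ba Bb; apply: (subsetP sCZ); rewrite inE commW ?xaW ?(subsetP nWB) //=.
  by apply/centP => c Bc; apply/commgP; rewrite x3.
have WcZ : W \subset 'C(Z) := subset_trans cWW (centS sZW).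
have WnZ : W \subset 'N(Z) := subset_trans WcZ (cent_sub Z).
have BcZ : B \subset 'C(Z) := subset_trans cBB (centS sZB).
pose f := fun a => coset Z [~ x, a].
have fM : morphic B f.
  apply/morphicP => a b Ba Bb; rewrite /f commgMJ conjg_mulR.
  have Na := subsetP WnZ _ (xaW a Ba); have Nb := subsetP WnZ _ (xaW b Bb).
  have N2 := subsetP WnZ _ (subsetP sZW _ (x2Z a b Ba Bb)).
  rewrite mulgA (cW _ _ (xaW b Bb) (xaW a Ba)).
  by rewrite (coset_morphM (groupM Na Nb) N2) (coset_morphM Na Nb) (coset_id (x2Z a b Ba Bb)) mulg1.
have KP : forall a, (a \in 'ker (morphm fM)) = (a \in B) && ([~ x, a] \in Z).
  move=> a; apply/idP/andP => [/morphpreP[Ba /set1P fa] | [Ba Za]].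
    by split=> //; apply: coset_idr fa; exact: subsetP WnZ _ (xaW a Ba).
  by apply/morphpreP; split=> //; apply/set1P; exact: coset_id Za.
set K := ('ker (morphm fM))%G.
have sKB : K \subset B by apply/subsetP => a; rewrite KP => /andP[].
set D := (coset Z @*^-1 (morphm fM @* B))%G.
have sZD : Z \subset D := sub_cosetpre _.
have sDN : D \subset 'N(Z) := subsetIl _ _.
have Dform : forall d, d \in D -> exists2 a, a \in B & exists2 z, z \in Z & d = z * [~ x, a].
  move=> d /morphpreP[Nd /morphimP[a Ba _ Ea]].
  exists a => //; apply: kercoset_rcoset Nd _ Ea.
  exact: subsetP WnZ _ (xaW a Ba).
have xaD : forall a, a \in B -> [~ x, a] \in D.
  move=> a Ba; rewrite mem_morphpre //; first exact: subsetP WnZ _ (xaW a Ba).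
  by have := mem_morphim (morphm_morphism fM) Ba Ba.
have sDW : D \subset W.
  apply/subsetP => d /Dform[a Ba [z Zz ->]].
  by rewrite groupM ?xaW // (subsetP sZW).
have D2 : forall d b c, d \in D -> b \in B -> c \in B -> [~ d, b, c] = 1.
  move=> d b c /Dform[a Ba [z Zz ->]] Bb Bc.
  have zb : [~ z, b] = 1 by apply/eqP/commgP/cB => //; exact: subsetP sZB _ Zz.
  by rewrite (commMgJ z) zb conj1g mul1g x3.
have xnD : x \notin D.
  by apply/negP => Dx; move: nt0; rewrite D2 ?eqxx.
have KcD : K \subset 'C(D).
  apply/subsetP => k; rewrite KP => /andP[Bk xkZ].
  apply/centP => d /Dform[a Ba [z Zz ->]].
  apply: commuteM; first exact/cB/(subsetP sZB).
  have ak : a ^ k = a by apply/conjg_fixP/commgP/cB.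
  have E1 : [~ x, a] ^ k = [~ x, a].
    rewrite conjRg ak (conjg_mulR x) (commMgJ x).
    have -> : [~ x, a] ^ [~ x, k] = [~ x, a].
      by apply/conjg_fixP/commgP/cW; rewrite ?xaW ?commW ?(subsetP nWB) ?(subsetP sZW).
    have -> : [~ [~ x, k], a] = 1.
      by apply/eqP/commgP/cB => //; exact: subsetP sZB _ xkZ.
    by rewrite mulg1.
  by apply/commute_sym/commgP/conjg_fixP.
set T := (D <*> K)%G.
have ET : T = D * K :> {set gT} := cent_joinEr KcD.
have aT : p.-abelem T := abelem_join pr (abelemS sDW aW) (abelemS sKB aB) KcD.
have sTS : T \subset S.
  by rewrite join_subG (subset_trans sDW sWS) (subset_trans sKB sBS).
have DK : D :&: K = Z.
  apply/eqP; rewrite eqEsubset subsetI sZD /=; apply/andP; split.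
    by rewrite subsetI (subset_trans (subsetIl _ _) sDW) (subset_trans (subsetIr _ _) sKB).
  apply/subsetP => z Zz; rewrite KP (subsetP sZB) //=.
  have -> : [~ x, z] = 1 by apply/eqP/commgP/cW => //; exact: subsetP sZW _ Zz.
  exact: group1.
have cardDZ : #|D : Z| = #|B : K|.
  by rewrite -card_quotient // cosetpreK card_morphim setIid.
have DKc : (#|D| * #|K| = #|B| * #|Z|)%N.
  rewrite -(Lagrange sZD) -(Lagrange sKB) cardDZ.
  by rewrite mulnC -[RHS]mulnA [(#|Z| * _)%N]mulnC.
have cardT : #|T| = #|B|.
  have E := mul_cardG D K; rewrite -(cent_joinEr KcD) DK DKc in E.
  by apply/eqP; rewrite -(eqn_pmul2r (cardG_gt0 Z)) E.
have ET' : T \in 'E_p^('r_p(S))(S) by apply/pnElemP; split; rewrite // cardT lB.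
exists T => //; apply/andP; split.
  apply/negP => cTW.
  set B0 := 'C_B(W)%G.
  have sKB0 : K \subset B0.
    by rewrite subsetI sKB (subset_trans (joing_subr D K) cTW).
  have cB0 : B0 \subset 'C(W) := subsetIr _ _.
  have aWB0 := abelem_join pr aW (abelemS (subsetIl _ _) aB) cB0.
  have sWB0S : W <*> B0 \subset S.
    by rewrite join_subG sWS (subset_trans (subsetIl _ _) sBS).
  have le := rank_bound pr sWB0S aWB0 EB.
  have E2 := mul_cardG W B0; rewrite -(cent_joinEr cB0) in E2.
  have WB0 : #|W :&: B0| <= #|Z|.
    by apply: subset_leq_card; apply: setIS; exact: subsetIl.
  have le3 : (#|W| * #|B0| <= #|D| * #|B0|)%N.
    rewrite E2 (leq_trans (leq_mul le WB0)) // -DKc.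
    by rewrite leq_mul2l subset_leq_card ?orbT.
  have : #|W| <= #|D| by rewrite -(leq_pmul2r (cardG_gt0 B0)).
  move=> leWD; have eDW : D :=: W by apply/eqP; rewrite eqEcard sDW leWD.
  by move: xnD; rewrite eDW Wx.
have nZ : [~ x, a0] \notin Z.
  apply/negP => Zxa; move: nt0; apply/negP; rewrite negbK.
  by apply/commgP/cB => //; exact: subsetP sZB _ Zxa.
rewrite setIC; apply: (leq_trans (proper_card (_ : Z \proper D))).
  by rewrite properE sZD; apply/subsetPn; exists [~ x, a0]; rewrite ?xaD.
by apply: subset_leq_card; rewrite subsetI sDW joing_subl.
Qed.

Lemma quad_exists (p : nat) (S W A : {group gT}) :
  prime p -> p.-group S -> p.-abelem W -> W \subset S -> S \subset 'N(W) ->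
  A \in 'E_p^('r_p(S))(S) -> ~~ (A \subset 'C(W)) ->
  exists2 B : {group gT}, B \in 'E_p^('r_p(S))(S) &
    exists2 e, (e \in B) && (e \notin 'C(W)) & forall w, w \in W -> [~ w, e, e] = 1.
Proof.
move=> pr pS aW sWS nWS EA nA.
pose P := fun B : {group gT} => (B \in 'E_p^('r_p(S))(S)) && ~~ (B \subset 'C(W)).
have PA : P A by rewrite /P EA nA.
case: (arg_maxnP (fun B : {group gT} => #|B :&: W|) PA) => B /andP[EB nB] Bmax.
exists B => //.
have quad : forall w a b, w \in W -> a \in B -> b \in B -> [~ w, a, b] = 1.
  move=> w a b Ww Ba Bb; apply/eqP/negPn/negP => nt.
  have [T ET /andP[nT lt]] := replace pr pS aW sWS nWS EB (ex_intro _ w (ex_intro _ a (ex_intro _ b (And4 Ww Ba Bb nt)))).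
  have := Bmax T; rewrite /P ET nT => /(_ isT).
  by move=> le; move: (leq_ltn_trans le lt); rewrite ltnn.
case/subsetPn: nB => e Be nCe; exists e; first by rewrite Be nCe.
by move=> w Ww; exact: quad.
Qed.

End Q.
End Aux.

Theorem theorem1p5 (gT : finGroupType) (p : nat) (S X : {group gT}) :
  prime p -> odd p -> p.-group S ->
  is_oliver p S X ->
  (forall L : {group gT},
     X \subset L -> L \subset thompson p S * X -> L <| S) ->
  thompson p S \subset X.
Proof.
move=> pr op pS HX Hnorm.
have p2 : 2 < p by move: (prime_gt1 pr) op; case: (p) => [|[|[|]]].
have [nXS _ _] := HX.
pose Wg := (<<[set x in 'C_S(X) | #[x] == p]>>)%G.
have [aW sWS nWS cXW] : [/\ p.-abelem Wg, Wg \subset S, S \subset 'N(Wg) & X \subset 'C(Wg)].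
  exact: (Aux.W_props pr p2 pS HX).
have sJS : thompson p S \subset S.
  rewrite /thompson gen_subG; apply/bigcupsP => A /pnElemP[sAS _ _] //.
have memJ : forall (A : {group gT}) e, A \in 'E_p^('r_p(S))(S) -> e \in A -> e \in thompson p S.
  by move=> A e EA Ae; rewrite /thompson mem_gen //; apply/bigcupP; exists A.
apply/negPn/negP => nJX.
have [A EA nAX] : exists2 A : {group gT}, A \in 'E_p^('r_p(S))(S) & ~~ (A \subset X).
  apply/exists_inP; apply: contraR nJX => /exists_inPn H.
  by rewrite /thompson gen_subG; apply/bigcupsP => B EB; exact/negbNE/H.
have [e [Je nXe qe]] : exists e, [/\ e \in thompson p S, e \notin X &
                         forall w, w \in Wg -> [~ w, e, e] = 1].
  case: (boolP (A \subset 'C(Wg))) => cAW.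
    case/subsetPn: nAX => e Ae nXe; exists e; split => //; first exact: memJ Ae.
    move=> w Ww; have -> : [~ w, e] = 1.
      by apply/eqP/commgP/esym/(centP (subsetP cAW e Ae)).
    exact: comm1g.
  have [B EB [e /andP[Be nCe] qe]] := Aux.quad_exists pr pS aW sWS nWS EA cAW.
  exists e; split => //; first exact: memJ Be.
  by apply: contra nCe; exact: (subsetP cXW).
have Se : e \in S := subsetP sJS e Je.
have neX : <[e]> \subset 'N(X) by rewrite cycle_subG (subsetP (normal_norm nXS)).
pose Q := (X <*> <[e]>)%G.
have EQ : Q = X * <[e]> :> {set gT} := norm_joinEr neX.
have sXQ : X \subset Q := joing_subl _ _.
have eQ : e \in Q by rewrite (subsetP (joing_subr _ _)) // cycle_id.
have nQS : Q <| S.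
  apply: Hnorm => //; rewrite EQ -(normC neX); apply: mulSg.
  by rewrite cycle_subG.
have ce : forall w i, w \in Wg -> commute [~ w, e ^+ i] e.
  move=> w i Ww; elim: i => [|i IH]; first by rewrite expg0 commg1; exact: commute_sym (commute1 e).
  rewrite expgSr commgMJ.
  have -> : [~ w, e ^+ i] ^ e = [~ w, e ^+ i] by apply/conjg_fixP/commgP/commute_sym.
  apply: commute_sym; apply: commuteM; apply: commute_sym => //.
  by apply/commgP; rewrite qe.
have H2 : [~: [~: Wg, Q], Q] = 1.
  apply/commG1P; rewrite gen_subG; apply/subsetP => _ /imset2P[w q Ww Qq ->].
  rewrite EQ in Qq; case/mulsgP: Qq => y t Xy /cycleP[i ->] ->.
  have wy : [~ w, y] = 1.
    by apply/eqP/commgP/esym; exact: (centP (subsetP cXW y Xy)) w Ww.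
  rewrite commgMJ wy conj1g mulg1.
  have cQ : 'C(Q) = 'C(X) :&: 'C(<[e]>) by exact: centY.
  suff Hc : [~ w, e ^+ i] \in 'C(X) :&: 'C(<[e]>) by move: Hc; rewrite -cQ.
  rewrite inE; apply/andP; split.
    apply: (subsetP (_ : Wg \subset 'C(X))); first by rewrite centsC.
    by apply: Aux.commW => //; rewrite (subsetP nWS) // groupX.
  by rewrite cent_cycle; apply/cent1P; exact: ce.
have p1 : 2 <= p.-1 by move: p2; case: (p) => [|[|[|]]].
have := Aux.ext_chain HX nQS sXQ (Aux.itcomm_quad H2 p1).
by move/subsetP/(_ e eQ); apply/negP.
Qed.
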